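(* Let $1\le n\le l$ be integers, put $c=2^l-3^n$ and $r=\gcd(l,n)$. Let $s\in S_{l,n}$ and consider the integer $3n+c$ cycle associated with $s$, whose elements are the integers $\varphi(t)$ for $t\in\sigma(s)$; its odd elements are the values $\varphi(t)$ with $t\in\sigma(s)$ and $t_1=1$. Then $$\min_{t\in\sigma(s)}\varphi(t)\le M_{l,n}\qquad\text{and}\qquad N_{l,n}\le \max\{\varphi(t): t\in\sigma(s),\ t_1=1\},$$ where $$N_{l,n}=2M_{l,n}-\sum_{i=0}^{r-1}2^{\,i l/r}\,3^{\,n-1-i n/r}.$$
   Context: $S_{l,n}$ denotes the set of 0-1 sequences $s=(s_1,\ldots,s_l)$ of length $l$ with exactly $n$ ones. For such $s$, $$\varphi(s)=\sum_{j=1}^{l} s_j\, 3^{\,s_{j+1}+\cdots+s_{l}}\,2^{\,j-1}.$$ The left shift is $\lambda_l(s_1,\ldots,s_l)=(s_2,\ldots,s_l,s_1)$ and $\sigma(s)=\{\lambda_l^k(s):k=1,\ldots,l\}$ is the orbit of $s$ under rotation. $M_{l,n}=\max_{s\in S_{l,n}}\min_{t\in\sigma(s)}\varphi(t)$. For an odd integer $c$, the $3n+c$ map on integers sends $x$ to $(3x+c)/2$ if $x$ is odd and to $x/2$ if $x$ is even. With $c=2^l-3^n$, the sequence $x_i=\varphi(\lambda_l^i(s))$, $i=0,\ldots,l$, is a cycle of this map of length $l$ (obtained by multiplying by $c$ the rational Collatz cycle through $\varphi(s)/(2^l-3^n)$), in which $x_i$ is odd exactly when the first entry of $\lambda_l^i(s)$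 is $1$; this cycle is called the $3n+c$ cycle corresponding to $s$ (it need not be primitive, i.e. its elements may share a common divisor). *)

(* Defs.v *)
From mathcomp Require Import all_boot all_order all_algebra.
Set Implicit Arguments. Unset Strict Implicit. Unset Printing Implicit Defensive.

(* 0-1 sequences are represented as seq bool (true = 1).
   Indices are 0-based: the paper's s_j is nth false s (j-1). *)

Definition phi (s : seq bool) : nat :=
  \sum_(j < size s) (nth false s j) * 3 ^ (count id (drop j.+1 s)) * 2 ^ j.

Definition lshift (s : seq bool) : seq bool := rot 1 s.

Definition lshiftn (k : nat) (s : seq bool) : seq bool := iter k lshift s.

Definition sigma_orbit (s : seq bool) : seq (seq bool) :=
  [seq lshiftn k s | k <- iota 1 (size s)].

(* min_{t in sigma(s)} phi(t); the seed phi s is itself attained at k = l. *)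
Definition minphi (s : seq bool) : nat :=
  \big[minn/phi s]_(t <- sigma_orbit s) phi t.

(* max { phi(t) : t in sigma(s), t_1 = 1 } (0 if there is no such t). *)
Definition maxodd (s : seq bool) : nat :=
  \max_(t <- sigma_orbit s | head false t) phi t.

Definition inS (l n : nat) (s : l.-tuple bool) : bool := count id s == n.

Definition M (l n : nat) : nat :=
  \max_(s : l.-tuple bool | inS n s) minphi s.

Definition N (l n : nat) : int :=
  let r := gcdn l n in
  (2 * (M l n)%:Z - \sum_(i < r) (2 ^ (i * l %/ r) * 3 ^ (n - 1 - i * n %/ r))%:Z)%R.

(* Main.v *)
Require Import Defs.
From mathcomp Require Import all_boot all_order all_algebra.
From mathcomp Require Import zify.
Import Order.TTheory GRing.Theory Num.Theory.

Fixpoint posl (t : seq bool) : seq nat :=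
  match t with
  | [::] => [::]
  | b :: t' => if b then 0 :: map succn (posl t') else map succn (posl t')
  end.

Lemma size_posl t : size (posl t) = count id t.
Proof. elim: t => //= b t IH; case: b => /=; by rewrite size_map IH. Qed.

Lemma posl_prop t i : i < size (posl t) ->
  [/\ nth 0 (posl t) i < size t,
      count id (take (nth 0 (posl t) i) t) = i &
      count id (take (nth 0 (posl t) i).+1 t) = i.+1].
Proof.
elim: t i => [|b t IH] i //=.
case: b => /=.
  case: i => [|i] /=; first by rewrite take0.
  rewrite size_map ltnS => Hi.
  rewrite (nth_map 0) //; have [H1 H2 H3] := IH i Hi.
  by rewrite /= H2 H3.
rewrite size_map => Hi.
rewrite (nth_map 0) //; have [H1 H2 H3] := IH i Hi.
by rewrite /= H2 H3.
Qed.

Definition psi (p : seq nat) : nat :=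
  \sum_(i < size p) 3 ^ (size p - 1 - i) * 2 ^ (nth 0 p i).

Lemma psi_cons x p : psi (x :: p) = 3 ^ (size p) * 2 ^ x + psi p.
Proof.
rewrite /psi /= big_ord_recl /= subn1 /= subn0; congr (_ + _).
apply: eq_bigr => i _ /=; congr (3 ^ _ * _).
rewrite /bump /=; lia.
Qed.

Lemma psi_map p : psi (map succn p) = 2 * psi p.
Proof.
rewrite /psi size_map big_distrr /=; apply: eq_bigr => i _.
rewrite (nth_map 0) // expnS; lia.
Qed.

Lemma phi_cons (b : bool) t : phi (b :: t) = b * 3 ^ (count id t) + 2 * phi t.
Proof.
rewrite /phi /= big_ord_recl /= drop0 muln1; congr (_ + _).
rewrite big_distrr /=; apply: eq_bigr => i _ /=.
rewrite expnS add0n /bump leq0n add1n; lia.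
Qed.

Lemma phi_psi t : phi t = psi (posl t).
Proof.
elim: t => [|b t IH]; first by rewrite /phi /psi /= !big_ord0.
rewrite phi_cons /=; case: b => /=.
  by rewrite psi_cons psi_map size_map size_posl IH expn0; lia.
by rewrite psi_map IH; lia.
Qed.

Lemma lshiftn_rot k s : k <= size s -> lshiftn k s = rot k s.
Proof.
elim: k => [|k IH] Hk; first by rewrite rot0.
rewrite /lshiftn iterS -/(lshiftn k s) IH ?(ltnW Hk) // /lshift.
by rewrite /Defs.lshift -rotD ?add1n.
Qed.

Lemma rot_in_orbit k s : k < size s -> rot k s \in sigma_orbit s.
Proof.
move=> Hk; case: k Hk => [|k] Hk.
  rewrite rot0 -{1}(rot_size s) -lshiftn_rot //.
  apply: map_f; rewrite mem_iota; lia.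
rewrite -lshiftn_rot ?(ltnW Hk) //; apply: map_f; rewrite mem_iota; lia.
Qed.

Lemma bigmin_le (x0 : nat) (r : seq (seq bool)) (F : seq bool -> nat) x :
  x \in r -> \big[minn/x0]_(t <- r) F t <= F x.
Proof.
elim: r => [|y r IH] //; rewrite inE big_cons => /orP [/eqP ->|H].
  exact: geq_minl.
exact: leq_trans (geq_minr _ _) (IH H).
Qed.

Lemma cnt_rot (s : seq bool) k m : k <= size s -> m <= size s ->
  if k + m <= size s then
    count id (take k s) + count id (take m (rot k s)) = count id (take (k + m) s)
  else count id (take m (rot k s)) + count id (take k s)
       = count id s + count id (take (k + m - size s) s).
Proof.
move=> Hk Hm; rewrite /rot; case: ifP => H.
  rewrite takel_cat ?size_drop; last lia.
  by rewrite takeD count_cat.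
rewrite take_cat size_drop ifF; last lia.
rewrite take_takel; last lia.
rewrite -{5}(cat_take_drop k s) !count_cat.
have -> : m - (size s - k) = k + m - size s by lia.
lia.
Qed.

Lemma ex_min (F : nat -> nat) L : exists2 k, k <= L & forall j, j <= L -> F k <= F j.
Proof.
elim: L => [|L [k Hk IH]]; first by exists 0 => // j; rewrite leqn0 => /eqP ->.
case: (leqP (F k) (F L.+1)) => H.
  exists k; first lia.
  move=> j; rewrite leq_eqVlt => /orP [/eqP -> //|]; rewrite ltnS; exact: IH.
exists L.+1 => // j; rewrite leq_eqVlt => /orP [/eqP -> //|]; rewrite ltnS => Hj.
exact: leq_trans (ltnW H) (IH j Hj).
Qed.

Lemma ex_max (F : nat -> nat) L : exists2 k, k <= L & forall j, j <= L -> F j <= F k.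
Proof.
elim: L => [|L [k Hk IH]]; first by exists 0 => // j; rewrite leqn0 => /eqP ->.
case: (leqP (F L.+1) (F k)) => H.
  exists k; first lia.
  move=> j; rewrite leq_eqVlt => /orP [/eqP -> //|]; rewrite ltnS; exact: IH.
exists L.+1 => // j; rewrite leq_eqVlt => /orP [/eqP -> //|]; rewrite ltnS => Hj.
exact: leq_trans (IH j Hj) (ltnW H).
Qed.

Definition ecorr (n l i : nat) : nat := if n %| i * l then 2 ^ (i * l %/ n) else 0.

Lemma cmp (p q : seq nat) n l : 0 < n -> size p = n -> size q = n ->
  (forall i, i < n -> nth 0 q i * n <= i * l) ->
  (forall i, i < n -> i * l <= nth 0 p i * n) ->
  2 * psi q <= psi p + \sum_(i < n) 3 ^ (n - 1 - i) * ecorr n l i.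
Proof.
move=> n0 Hp Hq HQ HP; rewrite /psi Hp Hq big_distrr -big_split /=.
apply: leq_sum => i _.
set a := nth 0 q i; set b := nth 0 p i; set x := 3 ^ (n - 1 - i).
have Ha := HQ i (ltn_ord i); have Hb := HP i (ltn_ord i).
suff H : 2 ^ a.+1 <= 2 ^ b + ecorr n l i.
  rewrite expnS in H; rewrite -mulnDr mulnCA; exact: leq_mul.
case: (ltnP a b) => Hab.
  by apply: leq_trans (leq_addr _ _); rewrite leq_pexp2l.
have ab : a = b by nia.
have Hil : i * l = b * n by nia.
rewrite /ecorr Hil dvdn_mull // mulnK // -ab expnS; lia.
Qed.

Lemma sum_mult d m (h : nat -> nat) : 0 < d ->
  \sum_(i < m * d) (if d %| i then h i else 0) = \sum_(k < m) h (k * d).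
Proof.
case: d => [//|d] _; elim: m => [|m IH]; first by rewrite mul0n !big_ord0.
rewrite mulSnr big_split_ord [RHS]big_ord_recr; congr (_ + _).
  by rewrite -IH; apply: eq_bigr.
rewrite big_ord_recl /= addn0 dvdn_mull // big1 ?addn0 // => j _.
rewrite dvdn_addr ?dvdn_mull // gtnNdvd //.
rewrite /bump leq0n add1n ltnS; exact: ltn_ord.
Qed.

Lemma corr_eq l n : 1 <= n -> n <= l ->
  \sum_(i < n) 3 ^ (n - 1 - i) * ecorr n l i =
  \sum_(k < gcdn l n) 2 ^ (k * l %/ gcdn l n) * 3 ^ (n - 1 - k * n %/ gcdn l n).
Proof.
move=> n1 nl.
set r := gcdn l n.
have r0 : 0 < r by rewrite gcdn_gt0 n1 orbT.
set d := n %/ r; set e := l %/ r.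
have Hn : n = d * r by rewrite divnK // dvdn_gcdr.
have Hl : l = e * r by rewrite divnK // dvdn_gcdl.
have d0 : 0 < d by move: n1; rewrite Hn; case: (d).
have cop : coprime d e.
  rewrite /coprime; apply/eqP.
  have : gcdn d e * r = r by rewrite muln_gcdl -Hn -Hl /r gcdnC.
  move/eqP; rewrite -{2}(mul1n r) eqn_pmul2r //; by move/eqP.
transitivity (\sum_(i < n) (if d %| i then 3 ^ (n - 1 - i) * 2 ^ (i %/ d * e) else 0)).
  apply: eq_bigr => i _; move: (nat_of_ord i) => {}i; rewrite /ecorr.
  have -> : (n %| i * l) = (d %| i).
    by rewrite Hn Hl mulnA dvdn_pmul2r // Gauss_dvdl.
  case: ifP => [/dvdnP [j ->]|_]; last by rewrite muln0.
  congr (_ * 2 ^ _).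
  have -> : j * d * l = (j * e) * n by rewrite Hn Hl; nia.
  by rewrite !mulnK.
have HS := sum_mult d r (fun i => 3 ^ (n - 1 - i) * 2 ^ (i %/ d * e)) d0.
have Hn' : r * d = n by rewrite mulnC.
rewrite Hn' in HS; rewrite HS; apply: eq_bigr => k _.
rewrite mulnK // mulnC; congr (_ * 3 ^ (_ - _)).
  by rewrite Hl mulnA mulnK.
by rewrite Hn mulnA mulnK.
Qed.

Lemma count_rot' k (s : seq bool) : count id (rot k s) = count id s.
Proof. by rewrite /rot count_cat addnC -count_cat cat_take_drop. Qed.

Lemma key (l n : nat) (s s' : seq bool) : 1 <= n -> n <= l ->
  size s = l -> size s' = l -> count id s = n -> count id s' = n ->
  2 * minphi s' <= maxodd s + \sum_(i < n) 3 ^ (n - 1 - i) * ecorr n l i.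
Proof.
move=> n1 nl Hs Hs' Cs Cs'.
have l0 : 0 < l by lia.
pose C' j := count id (take j s').
pose F' j := C' j * l + (l - j) * n.
have [k0 Hk0 Hmin0] := ex_min F' l.
pose k := if k0 == l then 0 else k0.
have Hkl : k < l by rewrite /k; case: eqP => E; lia.
have Hmin : forall j, j <= l -> F' k <= F' j.
  move=> j Hj; rewrite /k; case: eqP => E; last exact: Hmin0.
  have -> : F' 0 = F' k0 by rewrite /F' /C' E -Hs' take_size Cs' take0 /= subn0 subnn; lia.
  exact: Hmin0.
pose u := rot k s'.
have Pu : forall m, m <= l -> m * n <= count id (take m u) * l.
  move=> m Hm; have := cnt_rot s' k m; rewrite Hs'.
  move/(_ (ltnW Hkl) Hm); case: ifP => H E.
    have := Hmin (k + m) H; rewrite /F' /C'; rewrite /u; nia.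
  have := Hmin (k + m - l); rewrite /F' /C' Cs' in E *; move/(_ ltac:(lia)); rewrite /u; nia.
set q := posl u.
have Sq : size q = n by rewrite /q size_posl count_rot'.
have Hq : forall i, i < n -> nth 0 q i * n <= i * l.
  move=> i Hi; rewrite -Sq in Hi; have [H1 H2 _] := posl_prop u i Hi.
  rewrite size_rot Hs' in H1.
  have := Pu _ (ltnW H1); by rewrite H2.
pose C j := count id (take j s).
pose F j := C j * l + (l - j) * n.
have [k1 Hk1 Hmax0] := ex_max F l.
pose kk := if k1 == 0 then l else k1.
have Hkk : 0 < kk <= l by rewrite /kk; case: eqP => E; lia.
have Hmax : forall j, j <= l -> F j <= F kk.
  move=> j Hj; rewrite /kk; case: eqP => E; last exact: Hmax0.
  have -> : F l = F k1 by rewrite /F /C E -Hs take_size Cs take0 /= subn0 subnn; lia.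
  exact: Hmax0.
pose t := rot kk.-1 s.
have St : size t = l by rewrite size_rot.
have [x [b Et]] : exists x b, t = x :: b.
  by move: St; case: (t) => [|x b] /=; [lia | exists x, b].
have Sb : size b = l.-1 by move: St; rewrite Et /=; lia.
have Hrk : rot kk s = rcons b x.
  have -> : kk = 1 + kk.-1 by lia.
  rewrite rotD; last lia.
  by rewrite -/t Et rot1_cons.
have Hx : x = true.
  have := cnt_rot s kk.-1 1; rewrite Hs; move/(_ ltac:(lia) ltac:(lia)).
  rewrite ifT; last lia.
  rewrite -/t Et /= take0 /= addn0.
  have := Hmax kk.-1 ltac:(lia); rewrite /F /C.
  have -> : kk.-1 + 1 = kk by lia.
  case: (x) => //=; nia.
subst x.
have Pb : forall m, m <= size b -> count id (take m b) * l <= m * n.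
  move=> m Hm.
  have -> : take m b = take m (rot kk s) by rewrite Hrk -cats1 takel_cat.
  have := cnt_rot s kk m; rewrite Hs; move/(_ ltac:(lia) ltac:(lia)).
  case: ifP => H E.
    have := Hmax (kk + m) H; rewrite /F /C; nia.
  have := Hmax (kk + m - l); rewrite /F /C Cs in E *; move/(_ ltac:(lia)); nia.
set p := posl (true :: b).
have Sp : size p = n by rewrite /p size_posl -Et count_rot'.
have Hp : forall i, i < n -> i * l <= nth 0 p i * n.
  move=> i Hi; rewrite -Sp in Hi; have [H1 _ H3] := posl_prop (true :: b) i Hi.
  rewrite -/p /= in H1 H3 *.
  have Hb : count id (take (nth 0 p i) b) = i by move: H3; rewrite add1n => -[].
  have := Pb (nth 0 p i) ltac:(lia); by rewrite Hb.
have tin : true :: b \in sigma_orbit s.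
  rewrite -Et; apply: rot_in_orbit; lia.
have uin : u \in sigma_orbit s'.
  by apply: rot_in_orbit; rewrite Hs'.
have h1 : minphi s' <= psi q by rewrite -phi_psi; exact: bigmin_le.
have h2 : psi p <= maxodd s.
  by rewrite -phi_psi; exact: (@leq_bigmax_seq _ (sigma_orbit s) (fun t => head false t) phi _ tin isT).
have h3 := cmp p q n l n1 Sp Sq Hq Hp.
lia.
Qed.


Theorem mainTheorem2 (l n : nat) (s : l.-tuple bool) :
  1 <= n -> n <= l -> count id s = n ->
  minphi s <= M l n /\ (N l n <= (maxodd s)%:Z)%R.
Proof.
move=> n1 nl Cs; split.
  apply: (@leq_bigmax_cond _ (fun s : l.-tuple bool => inS n s) (fun s => minphi s) s).
  by rewrite /inS Cs.
set X := \sum_(i < n) 3 ^ (n - 1 - i) * ecorr n l i.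
have HM : M l n <= (maxodd s + X) %/ 2.
  apply/bigmax_leqP => s' Hs'.
  rewrite leq_divRL // mulnC; apply: key => //; rewrite ?size_tuple //.
  by apply/eqP.
have HM2 : 2 * M l n <= maxodd s + X.
  by rewrite mulnC -leq_divRL.
rewrite /N -/(gcdn l n).
have -> : (\sum_(i < gcdn l n) (2 ^ (i * l %/ gcdn l n) * 3 ^ (n - 1 - i * n %/ gcdn l n))%:Z)%R
   = Posz X.
  by rewrite /X corr_eq // (big_morph Posz PoszD (erefl _)).
lia.
Qed.
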